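(* Let $QC$ be an $n$-qubit quantum circuit composed of a sequence of stages, each stage being a $k$-controlled-NOT gate (for various $k\ge 0$) acting on some of the $n$ qubits. Suppose the circuit is affected by a single Pauli fault of type $\sigma_x$ or $\sigma_y$: an unwanted $\sigma_x$ or $\sigma_y$ is applied to one qubit wire at one gate-external error location, i.e. on that wire either before the first stage, between two consecutive stages, or after the last stage. Then for every computational basis input state $|s\rangle$ ($s\in\{0,1\}^n$), measuring the output of the faulty circuit in the computational basis detects the fault: the measured outcome differs from the output $GC|s\rangle$ of the ideal (fault-free) circuit $GC$.
   Context: Pauli matrices: $\sigma_x=|1\rangle\langle 0|+|0\rangle\langle 1|$, $\sigma_y=i|0\rangle\langle 1|-i|1\rangle\langle 0|$, $\sigma_z=|0\rangle\langle 0|-|1\rangle\langle 1|$. A $k$-controlled-NOT ($k$-CN) gate flips its target qubit (applies $\sigma_x$) exactly when all of its $k$ control qubits are in state $|1\rangle$, and acts as the identity otherwise; it is a permutation of computational basis states. The ideal circuit $GC$ is the same network without the fault. A fault is detected by an input if the computational-basis measurement outcome of the faulty circuit differs from that of $GC$ on that input. *)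

(* Defs.v *)
(* Quantum states of n qubits are amplitude vectors indexed by
   computational basis states {ffun 'I_n -> bool}, with amplitudes in algC. *)
From HB Require Import structures.
From mathcomp Require Import all_boot all_order all_algebra all_field.
Set Implicit Arguments. Unset Strict Implicit. Unset Printing Implicit Defensive.
Import Order.TTheory GRing.Theory Num.Theory.
Local Open Scope ring_scope.

Definition basis (n : nat) := {ffun 'I_n -> bool}.
Definition qstate (n : nat) := basis n -> algC.

Definition ket n (s : basis n) : qstate n := fun b => (b == s)%:R.

Definition flip n (b : basis n) (w : 'I_n) : basis n :=
  [ffun i => if i == w then ~~ b i else b i].

(* linear operator sending |a> to c a |f a> *)
Definition monomial_op n (f : basis n -> basis n) (c : basis n -> algC)
  (psi : qstate n) : qstate n :=
  fun b => \sum_(a : basis n) (f a == b)%:R * c a * psi a.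

Record cn_gate (n : nat) := CNGate { target : 'I_n; controls : {set 'I_n} }.

Definition well_formed n (g : cn_gate n) : bool := target g \notin controls g.

Definition cn_basis n (g : cn_gate n) (b : basis n) : basis n :=
  if [forall i in controls g, b i] then flip b (target g) else b.

Definition apply_gate n (g : cn_gate n) (psi : qstate n) : qstate n :=
  monomial_op (cn_basis g) (fun _ => 1) psi.

Definition run n (c : seq (cn_gate n)) (psi : qstate n) : qstate n :=
  foldl (fun phi g => apply_gate g phi) psi c.

(* Pauli operators:
   sigma_x = |1><0| + |0><1|,  sigma_y = i|0><1| - i|1><0|  on wire w *)
Inductive pauliXY := PauliX | PauliY.

Definition pauli_coef n (p : pauliXY) (w : 'I_n) (a : basis n) : algC :=
  match p with
  | PauliX => 1
  | PauliY => if a w then 'i else - 'i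
  end.

Definition apply_pauli n (p : pauliXY) (w : 'I_n) (psi : qstate n) : qstate n :=
  monomial_op (fun a => flip a w) (pauli_coef p w) psi.

(* faulty circuit: Pauli p on wire w at location l (0 = before the first stage,
   l = after the l-th stage, size c = after the last stage) *)
Definition run_faulty n (c : seq (cn_gate n)) (l : nat) (p : pauliXY) (w : 'I_n)
  (psi : qstate n) : qstate n :=
  run (drop l c) (apply_pauli p w (run (take l c) psi)).

(* Main.v *)
Require Import Defs.
From HB Require Import structures.
From mathcomp Require Import all_boot all_order all_algebra all_field.
From Stdlib Require Import FunctionalExtensionality.
Import Order.TTheory GRing.Theory Num.Theory.
Local Open Scope ring_scope.

Lemma mono_ket n (f : basis n -> basis n) cf (k : algC) (a : basis n) :
  monomial_op f cf (fun x => k * ket a x) = (fun b => (k * cf a) * ket (f a) b).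
Proof.
apply: functional_extensionality => b; rewrite /monomial_op (bigD1 a) //=.
rewrite big1 ?addr0; last first.
  by move=> x hx; rewrite /ket (negbTE hx) !mulr0.
rewrite /ket eqxx mulr1 [b == f a]eq_sym.
by case: (f a == b); rewrite /= ?mul0r ?mulr0 ?mul1r ?mulr1 // mulrC.
Qed.

Definition fold {n} (c : seq (cn_gate n)) (a : basis n) :=
  foldl (fun b g => cn_basis g b) a c.

Lemma run_ket n (c : seq (cn_gate n)) k a :
  run c (fun x => k * ket a x) = fun b => k * ket (fold c a) b.
Proof.
elim: c k a => [|g c IH] k a //=.
by rewrite /run /= -/(run c _) /apply_gate mono_ket mulr1 IH.
Qed.

Lemma ket1 n (s : basis n) : ket s = fun x => 1 * ket s x.
Proof. by apply: functional_extensionality => x; rewrite mul1r. Qed.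

Lemma cn_inv {n} {g : cn_gate n} : well_formed g -> involutive (cn_basis g).
Proof.
move=> wf b; rewrite {2}/cn_basis.
case h: [forall i in controls g, b i]; last by rewrite /cn_basis h.
rewrite /cn_basis.
have -> : [forall i in controls g, flip b (target g) i].
  apply/forall_inP => i hi; rewrite /flip ffunE.
  have -> : (i == target g) = false.
    by apply/negbTE; apply: contraNneq wf => <-.
  by move/forall_inP: h; apply.
by apply/ffunP => i; rewrite /flip !ffunE; case: eqP => // ->; rewrite negbK.
Qed.

Lemma fold_inj {n} (c : seq (cn_gate n)) : all (@well_formed n) c -> injective (fold c).
Proof.
elim: c => [_ x y //|g c IH] /= /andP [wg wc] x y h.
have e := IH wc _ _ h.
by rewrite -(cn_inv wg x) e cn_inv.
Qed.

Theorem theorem1 (n : nat) (c : seq (cn_gate n)) (p : pauliXY) (w : 'I_n) (l : nat) :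
  all (@well_formed n) c -> (l <= size c)%N ->
  forall (s : basis n) (b b' : basis n),
    run_faulty c l p w (ket s) b != 0 ->
    run c (ket s) b' != 0 ->
    b != b'.
Proof.
move=> wf _ s b b'.
rewrite /run_faulty ket1 run_ket /apply_pauli mono_ket run_ket.
have hc : c = take l c ++ drop l c by rewrite cat_take_drop.
rewrite [in run c _]hc run_ket.
rewrite /fold foldl_cat -!/(fold _ _) /ket.
case: (b =P _) => [-> _|_]; last by rewrite !mulr0 eqxx.
case: (b' =P _) => [-> _|_]; last by rewrite !mulr0 eqxx.
have wd : all (@well_formed n) (drop l c) by rewrite -(cat_take_drop l c) all_cat in wf; case/andP: wf.
apply/negP => /eqP /(fold_inj _ wd) /ffunP /(_ w).
by rewrite /flip ffunE eqxx; case: (_ _ w).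
Qed.
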